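(* Let $E$ be a real Hilbert space with $\dim(E)\ge 2$, let $h\in E$ be a unit vector, and let $f:\mathbb{R}_{\ge0}\to\mathbb{R}_{\ge0}$ satisfy $f(d)>0$ if and only if $d>0$. Define $C_f=\{x\in E\mid f(\|x_\perp\|)\le x_h\}$ and the relation $x\preceq_f y \iff y-x\in C_f$ on $E$. (a) If $\dim(E)\ge 3$, then $(E,\preceq_f)$ is a cc sponge if and only if the relation $\preceq_f$ is topologically closed (as a subset of $E\times E$) and $f$ is square-superadditive. (b) If $\dim(E)=2$ and the relation $\preceq_f$ is topologically closed, then $(E,\preceq_f)$ is a cc sponge if and only if $f$ is superadditive.
   Context: For $x\in E$ write $x=x_h h+x_\perp$ with $x_h=(x,h)\in\mathbb{R}$ and $x_\perp$ orthogonal to $h$. An orientation on a set $S$ is a reflexive, antisymmetric binary relation $\preceq$. For $P,Q\subseteq S$, $P\preceq Q$ means $p\preceq q$ for all $p\in P,q\in Q$. $P$ is right-bounded if $P\preceq\{s\}$ for some $s\in S$. An element $x$ is the join of $P$ if $P\preceq\{x\}$ and for all $y\in S$ with $P\preceq\{y\}$ we have $x\preceq y$. An oriented set $(S,\preceq)$ is a conditionally complete sponge (cc sponge) if every nonempty right-bounded subset of $S$ has a join. A function $f:\mathbb{R}_{\ge0}\to\mathbb{R}_{\ge0}$ is superadditive if $f(x+y)\ge f(x)+f(y)$ for all $x,y\ge0$, and square-superadditive if $f(\sqrt{x^2+y^2})\ge f(x)+f(y)$ for all $x,y\ge 0$. *)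

(* Defs.v *)
From HB Require Import structures.
From mathcomp Require Import all_boot all_order all_algebra.
From mathcomp Require Import all_classical all_reals all_analysis.
Set Implicit Arguments. Unset Strict Implicit. Unset Printing Implicit Defensive.
Import Order.TTheory GRing.Theory Num.Theory.
Import numFieldNormedType.Exports.
Local Open Scope classical_set_scope.
Local Open Scope ring_scope.

(* ip is a real inner product on E inducing the norm of E
   (together with completeness of E this makes E a real Hilbert space). *)
Definition is_inner_product {R : realType} (E : normedModType R)
    (ip : E -> E -> R) : Prop :=
  (forall x y, ip x y = ip y x) /\
  (forall a x y z, ip (a *: x + y) z = a * ip x z + ip y z) /\
  (forall x, ip x x = `|x| ^+ 2).

Definition dim_ge {R : realType} (E : normedModType R) (n : nat) : Prop :=
  exists v : 'I_n -> E, forall c : 'I_n -> R,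
    \sum_(i < n) c i *: v i = 0 -> forall i, c i = 0.

Definition dim_eq {R : realType} (E : normedModType R) (n : nat) : Prop :=
  dim_ge E n /\ ~ dim_ge E n.+1.

Definition orientation {S : Type} (le : S -> S -> Prop) : Prop :=
  (forall x, le x x) /\ (forall x y, le x y -> le y x -> x = y).

Definition set_le {S : Type} (le : S -> S -> Prop) (P Q : set S) : Prop :=
  forall p q, P p -> Q q -> le p q.

Definition right_bounded {S : Type} (le : S -> S -> Prop) (P : set S) : Prop :=
  exists s, set_le le P [set s].

Definition is_join {S : Type} (le : S -> S -> Prop) (P : set S) (x : S) : Prop :=
  set_le le P [set x] /\ forall y, set_le le P [set y] -> le x y.

Definition cc_sponge {S : Type} (le : S -> S -> Prop) : Prop :=
  orientation le /\
  forall P : set S, P !=set0 -> right_bounded le P -> exists x, is_join le P x.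

(* functions R_{>=0} -> R_{>=0}, represented by f : R -> R (values on
   negative arguments are irrelevant) *)
Definition superadditive {R : realType} (f : R -> R) : Prop :=
  forall x y, 0 <= x -> 0 <= y -> f x + f y <= f (x + y).

Definition square_superadditive {R : realType} (f : R -> R) : Prop :=
  forall x y, 0 <= x -> 0 <= y -> f x + f y <= f (Num.sqrt (x ^+ 2 + y ^+ 2)).

Definition comp_h {R : realType} {E : normedModType R} (ip : E -> E -> R)
  (h x : E) : R := ip x h.
Definition comp_perp {R : realType} {E : normedModType R} (ip : E -> E -> R)
  (h x : E) : E := x - comp_h ip h x *: h.

Definition C_f {R : realType} {E : normedModType R} (ip : E -> E -> R)
  (h : E) (f : R -> R) : set E :=
  [set x | f `|comp_perp ip h x| <= comp_h ip h x].

Definition prec_f {R : realType} {E : normedModType R} (ip : E -> E -> R)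
  (h : E) (f : R -> R) (x y : E) : Prop := C_f ip h f (y - x).

Definition closed_rel {R : realType} {E : normedModType R}
  (le : E -> E -> Prop) : Prop :=
  closed [set p : E * E | le p.1 p.2].

(* Main.v *)
Require Import Defs.
From HB Require Import structures.
From mathcomp Require Import all_boot all_order all_algebra.
From mathcomp Require Import all_classical all_reals all_analysis.
From mathcomp Require Import ring lra zify.
From Stdlib Require Import Lia.
Import Order.TTheory GRing.Theory Num.Theory.
Import numFieldNormedType.Exports.
Local Open Scope classical_set_scope.
Local Open Scope ring_scope.
Set Implicit Arguments. Unset Strict Implicit.



Lemma sq_le (R : realType) (a b : R) : 0 <= a -> 0 <= b -> a ^+ 2 <= b ^+ 2 -> a <= b.
Proof. move=> ha hb; rewrite !expr2 => H; nra. Qed.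



Section Top.
Variable R : realType.
Variable E : normedModType R.

Definition NP (le : E -> E -> Prop) :=
  forall x y, ~ le x y -> exists2 r : R, 0 < r &
    forall x' y', `|x' - x| < r -> `|y' - y| < r -> ~ le x' y'.

Lemma closed_NP le : closed_rel le -> NP le.
Proof.
move=> /closed_openC /[dup] op; rewrite openE => sub x y nle.
have : (~` [set p : E * E | le p.1 p.2]) (x, y) by [].
move=> /sub; rewrite /interior => /nbhs_ballP [e e0 He].
exists e => // x' y' hx hy; apply: (He (x', y')).
by split; rewrite /= -ball_normE /ball_ /= distrC.
Qed.

Lemma NP_closed le : NP le -> closed_rel le.
Proof.
move=> np [x y] /= cl; apply: contrapT => nle.
have [r r0 Hr] := np x y nle.
have [[x' y'] [/= le' B]] := cl _ (nbhsx_ballx (x, y) r r0).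
case: B => /= B1 B2; apply: (Hr x' y') => //.
  by move: B1; rewrite -ball_normE /ball_ /= distrC.
by move: B2; rewrite -ball_normE /ball_ /= distrC.
Qed.

End Top.


Lemma small_inv (R : realType) (t : R) : 0 < t -> exists N : nat, (N.+1%:R)^-1 < t.
Proof.
move=> t0; exists (Num.truncn t^-1).
have H := truncnS_gt (t^-1).
rewrite -[t in _ < t]invrK ltf_pV2 ?posrE ?invr_gt0 //.
Qed.


Section Main.
Variable R : realType.
Variable E : completeNormedModType R.
Variable ip : E -> E -> R.
Variable h : E.
Hypothesis ipP : is_inner_product ip.
Hypothesis h1 : `|h| = 1.
Local Notation hc := (comp_h ip h).
Local Notation pp := (comp_perp ip h).


Lemma ipC x y : ip x y = ip y x. Proof. by case: ipP. Qed.
Lemma ipDl a x y z : ip (a *: x + y) z = a * ip x z + ip y z.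
Proof. by case: ipP => _ []. Qed.
Lemma ipxx x : ip x x = `|x| ^+ 2. Proof. by case: ipP => _ []. Qed.
Lemma ip0l z : ip 0 z = 0.
Proof. have := ipDl 1 0 0 z; rewrite scaler0 addr0 mul1r => H; lra. Qed.
Lemma ipD x y z : ip (x + y) z = ip x z + ip y z.
Proof. by have := ipDl 1 x y z; rewrite scale1r mul1r. Qed.
Lemma ipZ a x z : ip (a *: x) z = a * ip x z.
Proof. by rewrite -(addr0 (a *: x)) ipDl ip0l addr0. Qed.
Lemma ipN x z : ip (- x) z = - ip x z.
Proof. by rewrite -scaleN1r ipZ mulN1r. Qed.
Lemma ipB x y z : ip (x - y) z = ip x z - ip y z.
Proof. by rewrite ipD ipN. Qed.
Lemma ipDr x y z : ip z (x + y) = ip z x + ip z y.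
Proof. by rewrite ipC ipD !(ipC _ z). Qed.
Lemma ipZr a x z : ip z (a *: x) = a * ip z x.
Proof. by rewrite ipC ipZ ipC. Qed.
Lemma ipNr x z : ip z (- x) = - ip z x.
Proof. by rewrite ipC ipN ipC. Qed.
Lemma ipBr x y z : ip z (x - y) = ip z x - ip z y.
Proof. by rewrite ipDr ipNr. Qed.
Lemma ip0r z : ip z 0 = 0.
Proof. by rewrite ipC ip0l. Qed.

Lemma normD2 x y : `|x + y| ^+ 2 = `|x| ^+ 2 + `|y| ^+ 2 + 2 * ip x y.
Proof. rewrite -!ipxx ipD !ipDr (ipC y x). ring. Qed.

Lemma normB2 x y : `|x - y| ^+ 2 = `|x| ^+ 2 + `|y| ^+ 2 - 2 * ip x y.
Proof. by rewrite normD2 normrN ipNr; ring. Qed.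




Lemma ip_hh : ip h h = 1.
Proof. by rewrite ipxx h1 expr1n. Qed.
Lemma hcD x y : hc (x + y) = hc x + hc y. Proof. exact: ipD. Qed.
Lemma hcZ a x : hc (a *: x) = a * hc x. Proof. exact: ipZ. Qed.
Lemma hcN x : hc (- x) = - hc x. Proof. exact: ipN. Qed.
Lemma hcB x y : hc (x - y) = hc x - hc y. Proof. exact: ipB. Qed.
Lemma hc0 : hc 0 = 0. Proof. exact: ip0l. Qed.
Lemma hcZh a : hc (a *: h) = a. Proof. by rewrite hcZ /comp_h ip_hh mulr1. Qed.
Lemma ppE x : pp x = x - hc x *: h. Proof. by []. Qed.
Lemma decomp x : x = pp x + hc x *: h. Proof. by rewrite ppE subrK. Qed.
Lemma hc_pp x : hc (pp x) = 0.
Proof. by rewrite ppE hcB hcZh subrr. Qed.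
Lemma ppD x y : pp (x + y) = pp x + pp y.
Proof. rewrite !ppE hcD scalerDl. by rewrite opprD addrACA. Qed.
Lemma ppZ a x : pp (a *: x) = a *: pp x.
Proof. by rewrite !ppE hcZ scalerBr scalerA. Qed.
Lemma ppN x : pp (- x) = - pp x.
Proof. by rewrite -scaleN1r ppZ scaleN1r. Qed.
Lemma ppB x y : pp (x - y) = pp x - pp y.
Proof. by rewrite ppD ppN. Qed.
Lemma pp0 : pp 0 = 0.
Proof. by rewrite ppE hc0 scale0r subr0. Qed.
Lemma ppZh a : pp (a *: h) = 0.
Proof. by rewrite ppE hcZh subrr. Qed.
Lemma pp_pp x : pp (pp x) = pp x.
Proof. by rewrite {2}(decomp x) ppD ppZh addr0. Qed.
Lemma ip_pp_h x : ip (pp x) h = 0. Proof. exact: hc_pp. Qed.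
Lemma ip_h_pp x : ip h (pp x) = 0. Proof. by rewrite ipC ip_pp_h. Qed.


Lemma norm2_decomp x : `|x| ^+ 2 = `|pp x| ^+ 2 + hc x ^+ 2.
Proof.
rewrite {1}(decomp x) normD2 ipZr.
rewrite ip_pp_h normrZ h1 mulr1 !mulr0 addr0.
by rewrite real_normK // num_real.
Qed.

Lemma norm_pp_le x : `|pp x| <= `|x|.
Proof.
apply: sq_le; rewrite ?normr_ge0 // (norm2_decomp x) lerDl; exact: sqr_ge0.
Qed.

Lemma norm_hc_le x : `|hc x| <= `|x|.
Proof.
apply: sq_le; rewrite ?normr_ge0 // (norm2_decomp x) real_normK ?num_real // lerDr; exact: sqr_ge0.
Qed.

Lemma ip_pp x y : ip (pp x) (pp y) = ip x y - hc x * hc y.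
Proof.
rewrite !ppE ipB !ipBr !ipZ !ipZr ip_hh /comp_h (ipC h y).
ring.
Qed.



Lemma sum3 (c : 'I_3 -> R) (v : 'I_3 -> E) :
  \sum_(i < 3) c i *: v i = c ord0 *: v ord0 + c (lift ord0 ord0) *: v (lift ord0 ord0)
     + c ord_max *: v ord_max.
Proof.
rewrite !big_ord_recl big_ord0 addr0 addrA.
by have -> : lift ord0 (lift ord0 ord0) = ord_max :> 'I_3 by apply: val_inj.
Qed.

Lemma sum2 (c : 'I_2 -> R) (v : 'I_2 -> E) :
  \sum_(i < 2) c i *: v i = c ord0 *: v ord0 + c ord_max *: v ord_max.
Proof.
rewrite !big_ord_recl big_ord0 addr0.
by have -> : lift ord0 ord0 = ord_max :> 'I_2 by apply: val_inj.
Qed.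

Definition fam3 (T : Type) (x0 x1 x2 : T) : 'I_3 -> T :=
  fun i => if val i == 0%N then x0 else if val i == 1%N then x1 else x2.

Lemma comb2 (c0 c1 c2 a0 b0 a1 b1 a2 b2 : R) (u w : E) :
  c0 *: (a0 *: u + b0 *: w) + c1 *: (a1 *: u + b1 *: w) + c2 *: (a2 *: u + b2 *: w)
  = (c0 * a0 + c1 * a1 + c2 * a2) *: u + (c0 * b0 + c1 * b1 + c2 * b2) *: w.
Proof.
rewrite !scalerDr !scalerA !scalerDl.
rewrite (addrACA (c0 * a0 *: u) (c0 * b0 *: w)).
by rewrite (addrACA (c0 * a0 *: u + c1 * a1 *: u)).
Qed.

Lemma dep3 (v : 'I_3 -> E) (u w : E) (a0 b0 a1 b1 a2 b2 : R) :
  (forall c : 'I_3 -> R, \sum_(i < 3) c i *: v i = 0 -> forall i, c i = 0) ->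
  v ord0 = a0 *: u + b0 *: w -> v (lift ord0 ord0) = a1 *: u + b1 *: w ->
  v ord_max = a2 *: u + b2 *: w -> False.
Proof.
move=> ind e0 e1 e2.
have key : forall c0 c1 c2, c0 * a0 + c1 * a1 + c2 * a2 = 0 ->
   c0 * b0 + c1 * b1 + c2 * b2 = 0 -> c0 = 0 /\ c1 = 0 /\ c2 = 0.
  move=> c0 c1 c2 A B.
  have := ind (fam3 c0 c1 c2); rewrite sum3 e0 e1 e2 /fam3 /= comb2 A B !scale0r addr0.
  move=> /(_ erefl) H; split; first exact: (H ord0).
  by split; [exact: (H (lift ord0 ord0)) | exact: (H ord_max)].
have [z0|nz0] := eqVneq (a0, b0) (0, 0).
  move: z0 => [a00 b00].
  have [] := key 1 0 0; [by rewrite a00; ring | by rewrite b00; ring |].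
  by move=> /eqP; rewrite oner_eq0.
have [d0|nd0] := eqVneq (a0 * b1 - a1 * b0) 0.
  have [a00|a0n] := eqVneq a0 0.
    have b0n : b0 != 0 by move: nz0; rewrite a00 xpair_eqE eqxx.
    have a10 : a1 = 0.
      have : a1 * b0 = 0 by move: d0; rewrite a00; lra.
      by move/eqP; rewrite mulf_eq0 (negbTE b0n) orbF => /eqP.
    have K1 : b1 * a0 + (- b0) * a1 + 0 * a2 = 0 by rewrite a00 a10; ring.
    have K2 : b1 * b0 + (- b0) * b1 + 0 * b2 = 0 by ring.
    have [_ [/eqP]] := key _ _ _ K1 K2.
    by rewrite oppr_eq0 (negbTE b0n).
  have e10 : a1 * b0 = a0 * b1 by apply/eqP; rewrite eq_sym -subr_eq0 d0.
  have K1 : a1 * a0 + (- a0) * a1 + 0 * a2 = 0 by ring.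
  have K2 : a1 * b0 + (- a0) * b1 + 0 * b2 = 0 by rewrite e10; ring.
  have [_ [/eqP]] := key _ _ _ K1 K2.
  by rewrite oppr_eq0 (negbTE a0n).
have K1 : (a1 * b2 - a2 * b1) * a0 + (a2 * b0 - a0 * b2) * a1 + (a0 * b1 - a1 * b0) * a2 = 0 by ring.
have K2 : (a1 * b2 - a2 * b1) * b0 + (a2 * b0 - a0 * b2) * b1 + (a0 * b1 - a1 * b0) * b2 = 0 by ring.
have [_ [_ /eqP]] := key _ _ _ K1 K2.
by rewrite (negbTE nd0).
Qed.

Definition fam2 (T : Type) (x0 x1 : T) : 'I_2 -> T :=
  fun i => if val i == 0%N then x0 else x1.

Lemma dep2 (v : 'I_2 -> E) (u : E) (a0 a1 : R) :
  (forall c : 'I_2 -> R, \sum_(i < 2) c i *: v i = 0 -> forall i, c i = 0) ->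
  v ord0 = a0 *: u -> v ord_max = a1 *: u -> False.
Proof.
move=> ind e0 e1.
have [a00|a0n] := eqVneq a0 0.
  have := ind (fam2 1 0); rewrite sum2 e0 e1 /fam2 /= a00 !scale0r scaler0 addr0.
  by move=> /(_ erefl ord0) /eqP; rewrite oner_eq0.
have := ind (fam2 a1 (- a0)); rewrite sum2 e0 e1 /fam2 /= !scalerA.
rewrite mulNr mulrC scaleNr subrr => /(_ erefl ord_max) /eqP.
by rewrite oppr_eq0 (negbTE a0n).
Qed.

Lemma normalize (w : E) : w != 0 -> hc w = 0 ->
  Num.norm ((Num.norm w)^-1 *: w) = 1 /\ ip ((Num.norm w)^-1 *: w) h = 0.
Proof.
move=> wn hw; split.
  rewrite normrZ ger0_norm ?invr_ge0 ?normr_ge0 // mulVf //.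
  by rewrite normr_eq0.
have hw' : ip w h = 0 by exact: hw.
by rewrite ipZ hw' mulr0.
Qed.

Lemma ip_pp_l x y : ip y h = 0 -> ip (pp x) y = ip x y.
Proof. by move=> hy; rewrite ppE ipB ipZ (ipC h y) hy mulr0 subr0. Qed.

Lemma e1_exists : dim_ge E 2 -> exists e1, `|e1| = 1 /\ ip e1 h = 0.
Proof.
move=> [v ind].
have [i Hi] : exists i, pp (v i) != 0.
  apply: contrapT => H.
  have H' : forall i, pp (v i) = 0.
    move=> i; apply/eqP; apply: contrapT => Hi; apply: H; exists i; exact/negP.
  apply: (dep2 (u := h) (a0 := hc (v ord0)) (a1 := hc (v ord_max)) ind).
    by rewrite {1}(decomp (v ord0)) H' add0r.
  by rewrite {1}(decomp (v ord_max)) H' add0r.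
exists (`|pp (v i)|^-1 *: pp (v i)); apply: normalize => //; exact: hc_pp.
Qed.

Lemma e12_exists : dim_ge E 3 -> exists e1 e2, `|e1| = 1 /\ `|e2| = 1 /\
  ip e1 h = 0 /\ ip e2 h = 0 /\ ip e1 e2 = 0.
Proof.
move=> [v ind].
have [i Hi] : exists i, pp (v i) != 0.
  apply: contrapT => H.
  have H' : forall i, pp (v i) = 0.
    move=> i; apply/eqP; apply: contrapT => Hi; apply: H; exists i; exact/negP.
  have ev : forall i, v i = hc (v i) *: h + 0 *: h.
    by move=> j; rewrite scale0r addr0 {1}(decomp (v j)) H' add0r.
  exact: (dep3 ind (ev ord0) (ev _) (ev ord_max)).
set e1 := `|pp (v i)|^-1 *: pp (v i).
have [n1 h1'] : `|e1| = 1 /\ ip e1 h = 0 := normalize Hi (hc_pp _).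
have ie1 : ip e1 e1 = 1 by rewrite ipxx n1 expr1n.
clearbody e1.
pose r j := pp (v j) - ip (v j) e1 *: e1.
have [j Hj] : exists j, r j != 0.
  apply: contrapT => H.
  have H' : forall j, r j = 0.
    move=> j; apply/eqP; apply: contrapT => Hj; apply: H; exists j; exact/negP.
  have ev : forall j, v j = hc (v j) *: h + ip (v j) e1 *: e1.
    move=> j; have := H' j; rewrite /r => /eqP; rewrite subr_eq0 => /eqP <-.
    by rewrite addrC -decomp.
  exact: (dep3 ind (ev ord0) (ev _) (ev ord_max)).
have hr : hc (r j) = 0.
  by rewrite /r hcB hc_pp hcZ /comp_h h1' mulr0 subrr.
have [n2 h2] := normalize Hj hr.
exists e1, (`|r j|^-1 *: r j); do 4!split => //.
rewrite ipZr /r ipBr ipZr ie1 mulr1 (ipC e1) ip_pp_l // subrr.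
by rewrite mulr0.
Qed.

Lemma ortho3 (u0 u1 u2 : E) : u0 != 0 -> u1 != 0 -> u2 != 0 ->
  ip u0 u1 = 0 -> ip u0 u2 = 0 -> ip u1 u2 = 0 -> dim_ge E 3.
Proof.
move=> n0 n1 n2 o01 o02 o12.
exists (fam3 u0 u1 u2) => c Hc.
move: Hc; rewrite sum3 /fam3 /= => Hc.
have key : forall u, ip (c ord0 *: u0 + c (lift ord0 ord0) *: u1 + c ord_max *: u2) u = 0.
  by move=> u; rewrite Hc ip0l.
have o10 : ip u1 u0 = 0 by rewrite ipC.
have o20 : ip u2 u0 = 0 by rewrite ipC.
have o21 : ip u2 u1 = 0 by rewrite ipC.
have sq : forall u : E, u != 0 -> ip u u != 0.
  by move=> u un; rewrite ipxx expf_neq0 // normr_eq0.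
have c0 : c ord0 = 0.
  have := key u0; rewrite !ipD !ipZ o10 o20 !mulr0 !addr0 => /eqP.
  by rewrite mulf_eq0 (negbTE (sq _ n0)) orbF => /eqP.
have c1 : c (lift ord0 ord0) = 0.
  have := key u1; rewrite !ipD !ipZ o01 o21 !mulr0 add0r addr0 => /eqP.
  by rewrite mulf_eq0 (negbTE (sq _ n1)) orbF => /eqP.
have c2 : c ord_max = 0.
  have := key u2; rewrite !ipD !ipZ o02 o12 !mulr0 !add0r => /eqP.
  by rewrite mulf_eq0 (negbTE (sq _ n2)) orbF => /eqP.
case=> [[|[|[|k]]] Hk].
- by rewrite -c0; congr c; apply: val_inj.
- by rewrite -c1; congr c; apply: val_inj.
- by rewrite -c2; congr c; apply: val_inj.
- by [].
Qed.

Lemma collinear (e1 : E) : ~ dim_ge E 3 -> `|e1| = 1 -> ip e1 h = 0 ->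
  forall x, pp x = ip x e1 *: e1.
Proof.
move=> nd n1 o1 x; apply/eqP; rewrite -subr_eq0; apply/negPn/negP => rn.
apply: nd; apply: (ortho3 (u0 := h) (u1 := e1) _ _ rn).
- by rewrite -normr_eq0 h1 oner_eq0.
- by rewrite -normr_eq0 n1 oner_eq0.
- by rewrite ipC.
- by rewrite ipBr ipZr ip_h_pp (ipC h) o1 mulr0 subrr.
- rewrite ipBr ipZr ipxx n1 expr1n mulr1 (ipC e1) ip_pp_l ?subrr //.
Qed.

Section Join.
Variable f : R -> R.

Hypothesis f_ge0 : forall d, 0 <= d -> 0 <= f d.
Hypothesis f_pos : forall d, 0 <= d -> (0 < f d <-> 0 < d).

Local Notation prec := (prec_f ip h f).

Lemma precE x y : prec x y <-> f `|pp (y - x)| <= hc y - hc x.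
Proof. by rewrite /prec_f /C_f /= hcB. Qed.

Lemma f0 : f 0 = 0.
Proof.
apply/eqP; rewrite eq_le f_ge0 // andbT.
by rewrite leNgt; apply/negP => /(f_pos (lexx 0)); rewrite ltxx.
Qed.

Lemma prec_orientation : orientation prec.
Proof.
split=> [x|x y].
  by apply/precE; rewrite subrr pp0 normr0 f0 subrr.
move=> /precE Hxy /precE Hyx.
have a1 := f_ge0 (normr_ge0 (pp (y - x))).
have a2 := f_ge0 (normr_ge0 (pp (x - y))).
have hy : hc y = hc x by lra.
have : f `|pp (y - x)| <= 0 by lra.
move=> H; have : ~ (0 < `|pp (y - x)|).
  by move/(f_pos (normr_ge0 _)); lra.
move=> H2; have : pp (y - x) = 0.
  by apply/normr0_eq0; apply/eqP; rewrite eq_le normr_ge0 andbT leNgt; apply/negP.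
move=> H3; apply/eqP; rewrite eq_sym -subr_eq0; apply/eqP.
by rewrite (decomp (y - x)) H3 hcB hy subrr scale0r addr0.
Qed.



Lemma pp_id v : hc v = 0 -> pp v = v.
Proof. by move=> hv; rewrite ppE hv scale0r subr0. Qed.

Lemma Kgen2 (e1 : E) : superadditive f -> `|e1| = 1 -> ip e1 h = 0 ->
  (forall x, pp x = ip x e1 *: e1) ->
  forall (a d : E) (t : R), 0 <= t -> 0 <= ip (pp a) (pp d) ->
     f `|pp a| + f (t * `|pp d|) <= f `|pp a + t *: pp d|.
Proof.
move=> S n1 o1 col a d t t0 s0.
have ie1 : ip e1 e1 = 1 by rewrite ipxx n1 expr1n.
rewrite !col in s0 *.
set al := ip a e1 in s0 *; set be := ip d e1 in s0 *.
rewrite ipZ ipZr ie1 mulr1 in s0.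
rewrite scalerA -scalerDl !normrZ n1 !mulr1.
have eq : `|al + t * be| = `|al| + t * `|be|.
  case: (lerP 0 al) => ha; case: (lerP 0 be) => hb.
  - rewrite !ger0_norm //; [apply: addr_ge0 => //; exact: mulr_ge0].
  - have al0 : al = 0 by nra.
    by rewrite al0 add0r normr0 add0r normrM (ger0_norm t0) (ltr0_norm hb).
  - have be0 : be = 0 by nra.
    by rewrite be0 mulr0 addr0 normr0 mulr0 addr0.
  - rewrite (ltr0_norm ha) (ltr0_norm hb) ltr0_norm; [ring|nra].
apply: le_trans (S _ _ (normr_ge0 _) (mulr_ge0 t0 (normr_ge0 _))) _.
by rewrite eq.
Qed.

Section Sym.
Hypothesis cc : cc_sponge prec.
Variable e1 : E.
Hypothesis n1 : `|e1| = 1.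
Hypothesis o1 : ip e1 h = 0.

Let sig z := (2 * hc z) *: h - z.

Let sig_pp z : pp (sig z) = - pp z.
Proof. by rewrite /sig ppB ppZh sub0r. Qed.
Let sig_hc z : hc (sig z) = hc z.
Proof. by rewrite /sig hcB hcZh; ring. Qed.
Let sigK z : sig (sig z) = z.
Proof. by rewrite {1}/sig sig_hc /sig opprB addrC subrK. Qed.
Let sigB a b : sig b - sig a = sig (b - a).
Proof.
rewrite /sig hcB mulrBr scalerBl !opprB.
by rewrite addrACA [in RHS]addrACA (addrC (- b)).
Qed.

Let sig_prec a b : prec a b -> prec (sig a) (sig b).
Proof. by move=> /precE H; apply/precE; rewrite -hcB sigB sig_pp normrN sig_hc hcB. Qed.

Lemma sym_pair x : 0 <= x -> forall v, hc v = 0 -> forall T,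
  f `|v - x *: e1| <= T -> f `|v + x *: e1| <= T -> f x + f `|v| <= T.
Proof.
move=> x0 v hv T H1 H2.
case: cc => [[_ anti] ccP].
pose P := [set p | p = x *: e1 \/ p = - (x *: e1)].
have hxe : hc (x *: e1) = 0 by rewrite hcZ /comp_h o1 mulr0.
have ppxe : pp (x *: e1) = x *: e1 by apply: pp_id.
have nxe : `|x *: e1| = x by rewrite normrZ n1 mulr1 ger0_norm.
pose s0 := f x *: h.
have Us0 : forall p, P p -> prec p s0.
  move=> p [->|->]; apply/precE.
    by rewrite hxe subr0 hcZh ppB ppZh sub0r normrN ppxe nxe.
  by rewrite hcN hxe oppr0 subr0 hcZh ppB ppZh sub0r normrN ppN normrN ppxe nxe.
have P0 : P !=set0 by exists (x *: e1); left.
have Pb : right_bounded prec P by exists s0 => p q Pp ->; exact: Us0.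
have [c [cU cj]] := ccP P P0 Pb.
have sigP : forall p, P p -> P (sig p).
  move=> p [->|->].
    by right; rewrite /sig hxe mulr0 scale0r sub0r.
  by left; rewrite /sig hcN hxe oppr0 mulr0 scale0r sub0r opprK.
have csU : set_le prec P [set sig c].
  move=> p q Pp ->.
  by have := cU (sig p) c (sigP p Pp) erefl => /sig_prec; rewrite sigK.
have csj : forall y, set_le prec P [set y] -> prec (sig c) y.
  move=> y Hy.
  have : set_le prec P [set sig y].
    move=> p q Pp ->.
    by have := Hy (sig p) y (sigP _ Pp) erefl => /sig_prec; rewrite sigK.
  by move=> /cj /sig_prec; rewrite sigK.
have ecs : c = sig c := anti c (sig c) (cj _ csU) (csj _ cU).
have ppc : pp c = 0.
  have E1 : pp c = - pp c by rewrite {1}ecs sig_pp.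
  have : pp c + pp c = 0 by rewrite {1}E1 addNr.
  by rewrite -mulr2n -scaler_nat => /eqP; rewrite scaler_eq0 pnatr_eq0 /= => /eqP.
have Uy1 : set_le prec P [set T *: h + v].
  move=> p q [->|->] ->; apply/precE.
    by rewrite ppB ppD ppZh add0r (pp_id hv) ppxe hcD hcZh hv addr0 hxe subr0.
  by rewrite ppB ppD ppZh add0r (pp_id hv) ppN ppxe opprK hcD hcZh hv addr0 hcN hxe oppr0 subr0.
have := cj _ Uy1 => /precE.
rewrite ppB ppD ppZh add0r (pp_id hv) ppc subr0 hcD hcZh hv addr0 => K.
have := cU (x *: e1) c (or_introl erefl) erefl => /precE.
rewrite ppB ppc sub0r normrN ppxe nxe hxe subr0 => K2.
lra.
Qed.


Lemma norm_sqrt (z : E) : `|z| = Num.sqrt (`|z| ^+ 2).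
Proof. by rewrite sqrtr_sqr ger0_norm. Qed.

Lemma ssa_of_cc (e2 : E) : `|e2| = 1 -> ip e2 h = 0 -> ip e1 e2 = 0 ->
  square_superadditive f.
Proof.
move=> n2 o2 o12 x y x0 y0.
have hv : hc (y *: e2) = 0 by rewrite hcZ /comp_h o2 mulr0.
have nv : `|y *: e2| = y by rewrite normrZ n2 mulr1 ger0_norm.
have o21 : ip e2 e1 = 0 by rewrite ipC.
have N1 : `|y *: e2 - x *: e1| = Num.sqrt (x ^+ 2 + y ^+ 2).
  rewrite norm_sqrt normB2 ipZ ipZr o21 !mulr0 subr0 !normrZ n1 n2 !mulr1.
  by rewrite !real_normK ?num_real // addrC.
have N2 : `|y *: e2 + x *: e1| = Num.sqrt (x ^+ 2 + y ^+ 2).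
  rewrite norm_sqrt normD2 ipZ ipZr o21 !mulr0 addr0 !normrZ n1 n2 !mulr1.
  by rewrite !real_normK ?num_real // addrC.
have := sym_pair x0 hv (T := f (Num.sqrt (x ^+ 2 + y ^+ 2))).
by rewrite N1 N2 nv => /(_ (lexx _) (lexx _)).
Qed.

Lemma D_of_cc x y : 0 <= x -> 0 <= y ->
  f x + f y <= f (x + y) \/ f x + f y <= f `|x - y|.
Proof.
move=> x0 y0.
have hv : hc (y *: e1) = 0 by rewrite hcZ /comp_h o1 mulr0.
have nv : `|y *: e1| = y by rewrite normrZ n1 mulr1 ger0_norm.
have N1 : `|y *: e1 - x *: e1| = `|x - y| by rewrite -scalerBl normrZ n1 mulr1 distrC.
have N2 : `|y *: e1 + x *: e1| = x + y.
  rewrite -scalerDl normrZ n1 mulr1 ger0_norm; first by rewrite addrC.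
  exact: addr_ge0.
pose M := Num.max (f `|x - y|) (f (x + y)).
have H1 : f `|y *: e1 - x *: e1| <= M by rewrite N1 le_max lexx.
have H2 : f `|y *: e1 + x *: e1| <= M by rewrite N2 le_max lexx orbT.
have := sym_pair x0 hv H1 H2; rewrite nv /M le_max => /orP [K|K].
  by right.
by left.
Qed.

Lemma lsc_of_closed : closed_rel prec -> forall d, 0 <= d -> forall eps, 0 < eps ->
  exists2 r, 0 < r & forall d', 0 <= d' -> `|d' - d| < r -> f d - eps < f d'.
Proof.
move=> hcl d d0 eps e0.
pose w := (f d - eps) *: h + d *: e1.
have hxe : forall t, hc (t *: e1) = 0 by move=> t; rewrite hcZ /comp_h o1 mulr0.
have ppe : forall t, pp (t *: e1) = t *: e1 by move=> t; apply: pp_id.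
have nw : ~ prec 0 w.
  move=> /precE; rewrite subr0 hc0 subr0 ppD ppZh add0r ppe hcD hcZh hxe addr0.
  rewrite normrZ n1 mulr1 ger0_norm //; lra.
have [r r0 Hr] := closed_NP hcl nw.
exists r => // d' d'0 dd.
have := Hr 0 ((f d - eps) *: h + d' *: e1).
rewrite subrr normr0 => /(_ r0).
rewrite opprD addrACA subrr add0r -scalerBl normrZ n1 mulr1 => /(_ dd) np.
rewrite ltNge; apply/negP => le; apply: np; apply/precE.
by rewrite subr0 hc0 subr0 ppD ppZh add0r ppe hcD hcZh hxe addr0 normrZ n1 mulr1 ger0_norm.
Qed.
End Sym.

Section SA.
Hypothesis Dp : forall x y, 0 <= x -> 0 <= y ->
  f x + f y <= f (x + y) \/ f x + f y <= f `|x - y|.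
Hypothesis lsc : forall d, 0 <= d -> forall eps, 0 < eps ->
  exists2 r, 0 < r & forall d', 0 <= d' -> `|d' - d| < r -> f d - eps < f d'.

Let fposn (n : nat) (g : R) : (0 < n)%N -> 0 < g -> 0 < f (n%:R * g).
Proof.
move=> n0 g0; apply/f_pos; first by apply: mulr_ge0; [exact: ler0n | exact: ltW].
by apply: mulr_gt0 => //; rewrite ltr0n.
Qed.

Let ng0 (n : nat) (g : R) : 0 < g -> 0 <= n%:R * g.
Proof. by move=> g0; apply: mulr_ge0; [exact: ler0n | exact: ltW]. Qed.

Lemma sa_nat (g : R) : 0 < g -> forall N n m, (n + m <= N)%N -> (0 < n)%N -> (0 < m)%N ->
  f (n%:R * g) + f (m%:R * g) <= f (n%:R * g + m%:R * g).
Proof.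
move=> g0; elim=> [|N IH] n m.
  by rewrite leqn0 addn_eq0 => /andP [/eqP ->].
move=> nmN n0 m0.
have fn := fposn n0 g0; have fm := fposn m0 g0.
case: (ltngtP n m) => [nm|mn|->].
- have [//|K] := Dp (ng0 n g0) (ng0 m g0).
  have e1 : `|n%:R * g - m%:R * g| = (m - n)%:R * g.
    by rewrite -mulrBl normrM (gtr0_norm g0) distrC -(natrB _ (ltnW nm)) normr_nat.
  have e2 : n%:R * g + (m - n)%:R * g = m%:R * g.
    by rewrite (natrB _ (ltnW nm)); ring.
  have := IH n (m - n)%N; rewrite e2 (subnKC (ltnW nm)) subn_gt0 nm.
  move=> /(_ _ n0 erefl) H.
  have : (m <= N)%N by lia.
  move=> /H; rewrite e1 in K; lra.
- have [//|K] := Dp (ng0 n g0) (ng0 m g0).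
  have e1 : `|n%:R * g - m%:R * g| = (n - m)%:R * g.
    by rewrite -mulrBl normrM (gtr0_norm g0) -(natrB _ (ltnW mn)) normr_nat.
  have e2 : (n - m)%:R * g + m%:R * g = n%:R * g.
    by rewrite (natrB _ (ltnW mn)); ring.
  have := IH (n - m)%N m; rewrite e2 (subnK (ltnW mn)) subn_gt0 mn.
  move=> /(_ _ erefl m0) H.
  have : (n <= N)%N by lia.
  move=> /H; rewrite e1 in K; lra.
- have [//|K] := Dp (ng0 m g0) (ng0 m g0).
  by move: K; rewrite subrr normr0 f0; lra.
Qed.

Lemma sa_of_D_lsc : superadditive f.
Proof.
move=> x y x0 y0.
have [->|xn] := eqVneq x 0; first by rewrite f0 !add0r.
have [->|yn] := eqVneq y 0; first by rewrite f0 !addr0.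
have xp : 0 < x by rewrite lt_def xn x0.
have yp : 0 < y by rewrite lt_def yn y0.
rewrite leNgt; apply/negP => K.
pose eps := (f x + f y - f (x + y)) / 2.
have e0 : 0 < eps / 2 by rewrite /eps; lra.
have [r1 r10 H1] := lsc x0 e0.
have [r2 r20 H2] := lsc y0 e0.
pose mu := Num.min (Num.min r1 r2) x.
have mu0 : 0 < mu by rewrite !lt_min r10 r20 xp.
have mu1 : mu <= r1 by rewrite !ge_min lexx.
have mu2 : mu <= r2 by rewrite !ge_min lexx orbT.
have mu3 : mu <= x by rewrite ge_min lexx orbT.
pose S := x + y.
have S0 : 0 < S by rewrite /S; lra.
have [q Hq] := small_inv (divr_gt0 mu0 S0).
pose Q := q.+1.
pose g := S / Q%:R.
have Q0 : 0 < Q%:R :> R by rewrite ltr0n.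
have g0 : 0 < g by apply: divr_gt0.
have gmu : g < mu.
  have H : S * (Q%:R)^-1 < S * (mu / S) by rewrite ltr_pM2l //; exact: Hq.
  by move: H; rewrite mulrCA mulfV ?mulr1 // lt0r_neq0.
have Sg : S = Q%:R * g by rewrite /g mulrC mulfVK // lt0r_neq0.
pose p := Num.truncn (x / g).
have /andP [pl pu] : p%:R <= x / g < p.+1%:R by apply: truncn_itv; apply: divr_ge0 => //; exact: ltW.
have pgx : p%:R * g <= x by rewrite -ler_pdivlMr.
have xpg : x < p%:R * g + g.
  by move: pu; rewrite ltr_pdivrMr // -natr1 mulrDl mul1r.
have p0 : (0 < p)%N.
  rewrite /p truncn_gt0 ler_pdivlMr // mul1r; lra.
have pQ : (p < Q)%N.
  rewrite -(ltr_nat R) -(ltr_pM2r g0) -Sg; rewrite /S; lra.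
pose mm := (Q - p)%N.
have m0 : (0 < mm)%N by rewrite subn_gt0.
have emm : mm%:R * g = S - p%:R * g by rewrite (natrB _ (ltnW pQ)) mulrBl -Sg.
have := sa_nat g0 (N := Q) (n := p) (m := mm); rewrite (subnKC (ltnW pQ)) => /(_ (leqnn _) p0 m0).
rewrite emm [p%:R * g + _]addrC subrK.
have A : f x - eps / 2 < f (p%:R * g).
  apply: H1; first by apply: mulr_ge0; [exact: ler0n | exact: ltW].
  rewrite ler0_norm; lra.
have B : f y - eps / 2 < f (S - p%:R * g).
  apply: H2; first by rewrite /S; lra.
  rewrite ger0_norm /S; lra.
rewrite /S /eps in A B *; lra.
Qed.

End SA.

Lemma fsmall : square_superadditive f -> forall D, 0 < D -> forall eps, 0 < eps ->
  exists t, [/\ 0 < t, t <= D & f t <= eps].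
Proof.
move=> S D D0 eps e0.
pose s : R := Num.sqrt 2.
have s1 : 1 <= s.
  apply: sq_le; [lra | exact: sqrtr_ge0 |]; rewrite /s sqr_sqrtr ?expr1n; lra.
have s0 : 0 < s by lra.
pose u k := D / s ^+ k.
have u0 : forall k, 0 < u k by move=> k; apply: divr_gt0 => //; apply: exprn_gt0.
have uS : forall k, Num.sqrt (u k.+1 ^+ 2 + u k.+1 ^+ 2) = u k.
  move=> k; have -> : u k.+1 ^+ 2 + u k.+1 ^+ 2 = 2 * u k.+1 ^+ 2 by ring.
  rewrite sqrtrM // sqrtr_sqr gtr0_norm // /u exprS -/s invfM.
  have sn : s != 0 by rewrite lt0r_neq0.
  by field; rewrite expf_neq0.
have key : forall k, 2 ^+ k * f (u k) <= f D.
  elim=> [|k IH]; first by rewrite expr0 mul1r /u expr0 invr1 mulr1.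
  apply: le_trans IH; rewrite exprSr -mulrA ler_pM2l ?exprn_gt0 //.
  have := S _ _ (ltW (u0 k.+1)) (ltW (u0 k.+1)); rewrite uS; lra.
pose k := Num.truncn (f D / eps).
have [_ kb] : (k%:R <= f D / eps) /\ (f D / eps < k.+1%:R).
  by apply/andP; apply: truncn_itv; apply: divr_ge0; [apply: f_ge0; lra | lra].
have k2 : k.+1%:R <= 2 ^+ k :> R by rewrite -natrX ler_nat ltn_expl.
exists (u k); split => //.
  rewrite /u ler_pdivrMr ?exprn_gt0 // ler_pMr //; exact: exprn_ege1.
have A : f D < k.+1%:R * eps by rewrite -ltr_pdivrMr.
have B : 2 ^+ k * f (u k) < 2 ^+ k * eps.
  apply: le_lt_trans (key k) _; apply: lt_le_trans A _; rewrite ler_pM2r //.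
by apply/ltW; move: B; rewrite ltr_pM2l ?exprn_gt0.
Qed.

Section Exist.
Hypothesis hcl : closed_rel prec.
Hypothesis mono : forall a b, 0 <= a -> a <= b -> f a <= f b.
Hypothesis KEY : forall (a d : E) (l : R), 0 <= l <= 1 ->
  f `|pp a| + f ((1 - l) * `|pp d|) <= f `|pp (a + (1 - l) *: d)| \/
  f `|pp a| + f (l * `|pp d|) <= f `|pp (a - l *: d)|.

Variable P : set E.
Hypothesis P0 : P !=set0.
Hypothesis Pb : right_bounded prec P.

Let U := [set y | forall p, P p -> prec p y].

Let p0 := projT1 (cid P0).
Let Pp0 : P p0 := projT2 (cid P0).

Let HS := [set hc y | y in U].

Let HS_lb : has_lbound HS.
Proof.
exists (hc p0) => _ [y Uy <-].
have /precE := Uy _ Pp0.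
have := f_ge0 (normr_ge0 (pp (y - p0))); lra.
Qed.

Let HS_ne : HS !=set0.
Proof.
case: Pb => s Hs; exists (hc s); exists s => //.
by move=> p Pp; apply: Hs.
Qed.

Let m := inf HS.

Let m_le y : U y -> m <= hc y.
Proof. by move=> Uy; apply: ge_inf HS_lb _ _; exists y. Qed.

Let notU w : hc w < m -> ~ U w.
Proof. by move=> hw Uw; have := m_le Uw; lra. Qed.

Let near_m e : 0 < e -> exists y, U y /\ hc y < m + e.
Proof.
move=> e0; have [_ [y Uy <-] hy] := inf_adherent e0 (conj HS_ne HS_lb).
by exists y.
Qed.

Lemma descent c1 c2 e1 e2 l : U c1 -> U c2 -> hc c1 <= m + e1 -> hc c2 <= m + e2 ->
  0 <= l <= 1 ->
  f (l * `|pp (c2 - c1)|) <= e1 \/ f ((1 - l) * `|pp (c2 - c1)|) <= e2.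
Proof.
move=> U1 U2 H1 H2 l01.
apply: contrapT => /not_orP [/negP]; rewrite -ltNge => A1 /negP; rewrite -ltNge => A2.
set D := `|pp (c2 - c1)| in A1 A2.
pose dl := Num.min (f (l * D) - e1) (f ((1 - l) * D) - e2).
have dl0 : 0 < dl by rewrite lt_min !subr_gt0 A1 A2.
have dl1 : dl <= f (l * D) - e1 by rewrite ge_min lexx.
have dl2 : dl <= f ((1 - l) * D) - e2 by rewrite ge_min lexx orbT.
pose z := c1 + l *: (c2 - c1).
pose w := pp z + (m - dl / 2) *: h.
have hw : hc w = m - dl / 2 by rewrite hcD hc_pp hcZh add0r.
have /notU : hc w < m by rewrite hw; lra.
move=> /existsNP [p /not_implyP [Pp /precE /negP]].
rewrite -ltNge hw => np.
have epp : pp (w - p) = pp (z - p) by rewrite /w !ppB ppD ppZh addr0 pp_pp.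
rewrite epp in np.
have [K|K] := KEY (z - p) (c2 - c1) l01.
  have e : z - p + (1 - l) *: (c2 - c1) = c2 - p.
    by rewrite /z scalerBl scale1r addrAC (addrC (c2 - c1)) addrA addrK [c1 + _]addrC subrK.
  rewrite e in K.
  have /precE := U2 _ Pp; lra.
have e : z - p - l *: (c2 - c1) = c1 - p.
  by rewrite /z addrAC addrK.
rewrite e in K.
have /precE := U1 _ Pp; lra.
Qed.


Let ex_y (n : nat) : exists y, U y /\ hc y < m + (n.+1%:R)^-1.
Proof. by apply: near_m; rewrite invr_gt0 ltr0Sn. Qed.
Let ys n := projT1 (cid (ex_y n)).
Let ysU n : U (ys n). Proof. exact: (projT2 (cid (ex_y n))).1. Qed.
Let ysh n : hc (ys n) < m + (n.+1%:R)^-1. Proof. exact: (projT2 (cid (ex_y n))).2. Qed.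

Lemma norm_split x : `|x| <= `|pp x| + `|hc x|.
Proof.
rewrite {1}(decomp x); apply: le_trans (ler_normD _ _) _.
by rewrite normrZ h1 mulr1.
Qed.

Let dist_small eps : 0 < eps -> exists2 eta, 0 < eta &
  forall y y', U y -> U y' -> hc y <= m + eta -> hc y' <= m + eta -> `|y' - y| < eps.
Proof.
move=> e0.
have fe : 0 < f (eps / 4) by apply/f_pos; lra.
exists (Num.min (f (eps / 4) / 2) (eps / 4)).
  by rewrite lt_min; apply/andP; split; lra.
move=> y y' Uy Uy' hy hy'.
have et1 : Num.min (f (eps / 4) / 2) (eps / 4) <= f (eps / 4) / 2 by rewrite ge_min lexx.
have et2 : Num.min (f (eps / 4) / 2) (eps / 4) <= eps / 4 by rewrite ge_min lexx orbT.
set eta := Num.min _ _ in hy hy' et1 et2.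
have l01 : 0 <= (1 / 2 : R) <= 1 by apply/andP; split; lra.
have A : f (1 / 2 * `|pp (y' - y)|) <= eta.
  have [//|] := descent Uy Uy' hy hy' l01.
  by have -> : 1 - 1 / 2 = 1 / 2 :> R by lra.
have B : `|pp (y' - y)| < eps / 2.
  rewrite ltNge; apply/negP => C.
  have := mono (a := eps / 4) (b := 1 / 2 * `|pp (y' - y)|).
  have : 0 <= eps / 4 by lra.
  move=> H /(_ H); have : eps / 4 <= 1 / 2 * `|pp (y' - y)| by lra.
  move=> H2 /(_ H2); lra.
have C : `|hc (y' - y)| <= eta.
  have := m_le Uy; have := m_le Uy'; rewrite hcB => ? ?.
  rewrite ler_norml; apply/andP; split; lra.
apply: le_lt_trans (norm_split _) _; lra.
Qed.

Let ys_cauchy : cauchy_ex (ys @ \oo).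
Proof.
move=> eps e0.
have [eta eta0 Heta] := dist_small e0.
have [N HN] := small_inv eta0.
exists (ys N); exists N => // n /= Nn.
rewrite -ball_normE /ball_ /= distrC.
have le1 : (n.+1%:R)^-1 <= (N.+1%:R)^-1 :> R.
  by rewrite lef_pV2 ?posrE ?ltr0Sn // ler_nat ltnS.
apply: Heta; rewrite ?ysU //.
  by apply/ltW/(lt_trans (ysh N)); rewrite ltrD2l.
apply/ltW/(lt_le_trans (ysh n)); rewrite lerD2l.
exact: (le_trans le1 (ltW HN)).
Qed.

Let ys_cvg : cvg (ys @ \oo).
Proof. by apply/cauchy_cvgP; apply: cauchy_exP. Qed.

Let c := lim (ys @ \oo).

Let cv : ys @ \oo --> c := ys_cvg.

Let near_c eps : 0 < eps -> exists N, forall n, (N <= n)%N -> `|c - ys n| < eps.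
Proof. by move=> e0; have [N _ HN] := cvgr_dist_lt _ _ cv eps e0; exists N. Qed.

Let cU : U c.
Proof.
move=> p Pp; apply: contrapT => np.
have [r r0 Hr] := closed_NP hcl np.
have [N HN] := near_c r0.
apply: (Hr p (ys N)); first by rewrite subrr normr0.
  by rewrite distrC; apply: HN.
exact: ysU.
Qed.

Let hc_c : hc c = m.
Proof.
apply/eqP; rewrite eq_le m_le ?cU // andbT.
apply/ler_addgt0Pr => e e0.
have e2 : 0 < e / 2 by lra.
have [N1 HN1] := near_c e2.
have [N2 HN2] := small_inv e2.
pose n := maxn N1 N2.
have A : hc c - hc (ys n) <= e / 2.
  rewrite -hcB; apply: le_trans (ler_norm _) _; apply: le_trans (norm_hc_le _) _.
  by apply/ltW/HN1; rewrite leq_maxl.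
have B : hc (ys n) <= m + e / 2.
  apply/ltW/(lt_le_trans (ysh n)); rewrite lerD2l; apply: le_trans (ltW HN2).
  by rewrite lef_pV2 ?posrE ?ltr0Sn // ler_nat ltnS leq_maxr.
lra.
Qed.

Lemma exists_join : exists x, is_join prec P x.
Proof.
exists c; split; first by move=> p q Pp ->; exact: cU.
move=> y Hy.
have Uy : U y by move=> p Pp; exact: Hy.
apply: contrapT => npy.
have [r r0 Hr] := closed_NP hcl npy.
set D := `|pp (y - c)|.
have mly := m_le Uy.
have [D0|Dpos] := eqVneq D 0.
  by apply: npy; apply/precE; rewrite -/D D0 f0 hc_c subr_ge0.
have D0 : 0 < D by rewrite lt_def Dpos normr_ge0.
pose l := Num.min (1 / 2) (r / (2 * D)).
have l0 : 0 < l by rewrite lt_min; apply/andP; split; [lra|]; apply: divr_gt0; lra.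
have l1 : l <= 1 / 2 by rewrite ge_min lexx.
have l2 : l <= r / (2 * D) by rewrite ge_min lexx orbT.
have l01 : 0 <= l <= 1 by apply/andP; split; lra.
have H1 : hc c <= m + 0 by rewrite hc_c addr0.
have H2 : hc y <= m + (hc y - m) by lra.
have [A|A] := descent cU Uy H1 H2 l01.
  have : 0 < f (l * D) by apply/f_pos; [apply: mulr_ge0; lra | apply: mulr_gt0].
  lra.
pose V := (1 - l) *: pp (y - c) + (hc y - m) *: h.
pose y' := c + V.
have ey' : y' - c = V by rewrite /y' [c + V]addrC addrK.
have ppV : pp V = (1 - l) *: pp (y - c) by rewrite /V (ppD ((1 - l) *: _)) ppZ pp_pp ppZh addr0.
have hcV : hc V = hc y - m by rewrite /V hcD hcZ hc_pp mulr0 add0r hcZh.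
apply: (Hr c y'); first by rewrite subrr normr0.
  have ey : y - c = pp (y - c) + (hc y - m) *: h by rewrite {1}(decomp (y - c)) hcB hc_c.
  have -> : y' - y = (y' - c) - (y - c) by rewrite opprB addrA subrK.
  rewrite ey' ey /V opprD addrACA subrr addr0 scalerBl scale1r addrAC subrr add0r normrN.
  rewrite normrZ ger0_norm; last lra.
  have : l * D <= r / (2 * D) * D by rewrite ler_pM2r.
  have -> : r / (2 * D) * D = r / 2 by field.
  rewrite -/D; lra.
apply/precE; rewrite -hcB ey' ppV hcV normrZ ger0_norm ?subr_ge0 //.
lra.
Qed.
End Exist.

Lemma cc_of : closed_rel prec -> (forall a b, 0 <= a -> a <= b -> f a <= f b) ->
  (forall (a d : E) (l : R), 0 <= l <= 1 ->
  f `|pp a| + f ((1 - l) * `|pp d|) <= f `|pp (a + (1 - l) *: d)| \/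
  f `|pp a| + f (l * `|pp d|) <= f `|pp (a - l *: d)|) -> cc_sponge prec.
Proof.
move=> hcl mono KEY; split; first exact: prec_orientation.
by move=> P P0 Pb; apply: (exists_join hcl mono KEY P0 Pb).
Qed.

Lemma KEY_of_Kgen :
  (forall (a d : E) (t : R), 0 <= t -> 0 <= ip (pp a) (pp d) ->
     f `|pp a| + f (t * `|pp d|) <= f `|pp a + t *: pp d|) ->
  forall (a d : E) (l : R), 0 <= l <= 1 ->
  f `|pp a| + f ((1 - l) * `|pp d|) <= f `|pp (a + (1 - l) *: d)| \/
  f `|pp a| + f (l * `|pp d|) <= f `|pp (a - l *: d)|.
Proof.
move=> Kg a d l /andP [l0 l1].
have [s0|s0] := leP 0 (ip (pp a) (pp d)).
  left; rewrite ppD ppZ; apply: Kg => //; lra.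
right; have := Kg a (- d) l l0.
rewrite ppN ipNr normrN scalerN ppB ppZ; apply; lra.
Qed.

Lemma mono_of_SSA : square_superadditive f ->
  forall a b, 0 <= a -> a <= b -> f a <= f b.
Proof.
move=> S a b a0 ab.
have b0 : 0 <= b by lra.
have c0 : 0 <= b ^+ 2 - a ^+ 2 by rewrite subr_ge0 ler_pXn2r // ?inE.
have := S a (Num.sqrt (b ^+ 2 - a ^+ 2)) a0 (sqrtr_ge0 _).
rewrite sqr_sqrtr // (_ : a ^+ 2 + _ = b ^+ 2); last by ring.
rewrite sqrtr_sqr ger0_norm //.
have := f_ge0 (sqrtr_ge0 (b ^+ 2 - a ^+ 2)); lra.
Qed.

Lemma mono_of_SA : superadditive f ->
  forall a b, 0 <= a -> a <= b -> f a <= f b.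
Proof.
move=> S a b a0 ab.
have := S a (b - a) a0; rewrite subr_ge0 => /(_ ab).
rewrite [a + (b - a)]addrC subrK; have : 0 <= b - a by lra.
move=> /f_ge0; lra.
Qed.

Lemma Kgen3 : square_superadditive f ->
  forall (a d : E) (t : R), 0 <= t -> 0 <= ip (pp a) (pp d) ->
     f `|pp a| + f (t * `|pp d|) <= f `|pp a + t *: pp d|.
Proof.
move=> S a d t t0 s0.
have mono := mono_of_SSA S.
apply: le_trans (S _ _ (normr_ge0 _) (mulr_ge0 t0 (normr_ge0 _))) _.
apply: mono; first exact: sqrtr_ge0.
rewrite -(ger0_norm (normr_ge0 (pp a + t *: pp d))) -sqrtr_sqr.
rewrite ler_sqrt; last exact: sqr_ge0.
rewrite (normD2 (pp a) (t *: pp d)) ipZr normrZ ger0_norm // exprMn.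
have : 0 <= 2 * (t * ip (pp a) (pp d)) by apply: mulr_ge0 => //; apply: mulr_ge0.
lra.
Qed.

Section C3.
Hypothesis cc : cc_sponge prec.
Hypothesis S : square_superadditive f.
Variable e1 : E.
Hypothesis n1 : `|e1| = 1.
Hypothesis o1 : ip e1 h = 0.

Let hxe t : hc (t *: e1) = 0. Proof. by rewrite hcZ /comp_h o1 mulr0. Qed.
Let ppe t : pp (t *: e1) = t *: e1. Proof. by apply: pp_id. Qed.
Let ne t : 0 <= t -> `|t *: e1| = t. Proof. by move=> t0; rewrite normrZ n1 mulr1 ger0_norm. Qed.

Lemma leftlsc D : 0 < D -> forall a, a < f D -> exists d', [/\ 0 <= d', d' < D & a < f d'].
Proof.
move=> D0 a aD; apply: contrapT => nH.
have H : forall d', 0 <= d' -> d' < D -> f d' <= a.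
  move=> d' d0 dD; rewrite leNgt; apply/negP => ad; apply: nH; by exists d'.
case: cc => [[_ anti] ccP].
pose p2 := a *: h + D *: e1.
have hp2 : hc p2 = a by rewrite hcD hcZh hxe addr0.
have pp2 : pp p2 = D *: e1 by rewrite ppD ppZh add0r ppe.
pose P := [set p | p = 0 \/ p = p2].
pose s := (`|a| + f D) *: h.
have fD0 : 0 <= f D by apply: f_ge0; lra.
have Us : forall p, P p -> prec p s.
  move=> p [->|->]; apply/precE.
    rewrite subr0 ppZh normr0 f0 hc0 subr0 hcZh; apply: addr_ge0 => //.
  rewrite ppB ppZh sub0r normrN pp2 ne; last lra.
  rewrite hcZh hp2; have := ler_norm a; lra.
have P0 : P !=set0 by exists 0; left.
have Pb : right_bounded prec P by exists s => p q Pp ->; exact: Us.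
have [c [cU cj]] := ccP P P0 Pb.
have hcc : hc c <= a.
  apply/ler_addgt0Pr => e e0.
  have [t [t0 tD ft]] := fsmall S D0 e0.
  pose yt := (a + f t) *: h + (D - t) *: e1.
  have Uyt : set_le prec P [set yt].
    move=> p q [->|->] ->; apply/precE.
      rewrite subr0 hc0 subr0 ppD ppZh add0r ppe ne ?subr_ge0 // hcD hcZh hxe addr0.
      have := H (D - t); have := f_ge0 (ltW t0); lra.
    rewrite ppB ppD ppZh add0r ppe pp2 -scalerBl.
    have -> : D - t - D = - t by ring.
    rewrite scaleNr normrN ne; last lra.
    rewrite hcD hcZh hxe addr0 hp2; lra.
  have := cj _ Uyt => /precE; rewrite /yt hcD hcZh hxe addr0.
  have := f_ge0 (normr_ge0 (pp ((a + f t) *: h + (D - t) *: e1 - c))); lra.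
have := cU p2 c (or_intror erefl) erefl => /precE; rewrite hp2 => K.
have K2 : f `|pp (c - p2)| <= 0 by lra.
have ppc : pp c = D *: e1.
  have : ~ (0 < `|pp (c - p2)|) by move/(f_pos (normr_ge0 _)); lra.
  move=> nz; have : pp (c - p2) = 0.
    by apply/normr0_eq0; apply/eqP; rewrite eq_le normr_ge0 andbT leNgt; apply/negP.
  by rewrite ppB pp2 => /eqP; rewrite subr_eq0 => /eqP.
have := cU 0 c (or_introl erefl) erefl => /precE.
rewrite subr0 hc0 subr0 ppc ne; lra.
Qed.

Lemma closed3 : closed_rel prec.
Proof.
have mono := mono_of_SSA S.
apply: NP_closed => x y /precE np.
move: np; rewrite -hcB => /negP; rewrite -ltNge => np.
set w := y - x in np.
have key : forall x' y', `|hc (y' - x') - hc w| <= `|x' - x| + `|y' - y| /\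
    `|pp w| <= `|pp (y' - x')| + (`|x' - x| + `|y' - y|).
  move=> x' y'.
  have ew : y' - x' - w = (y' - y) - (x' - x).
    by rewrite /w !opprB addrACA [in RHS]addrACA; congr (_ + _); exact: addrC.
  have nb : `|y' - x' - w| <= `|x' - x| + `|y' - y|.
    by rewrite ew (addrC `|x' - x|); exact: ler_normB.
  split; first by rewrite -hcB; apply: le_trans (norm_hc_le _) nb.
  have -> : pp w = pp (y' - x') - pp (y' - x' - w) by rewrite -ppB subKr.
  apply: le_trans (ler_normB _ _) _; rewrite lerD2l.
  exact: le_trans (norm_pp_le _) nb.
have [D0|Dpos] := eqVneq `|pp w| 0.
  rewrite D0 f0 in np.
  exists (- hc w / 2); first lra.
  move=> x' y' hx hy /precE; rewrite -hcB.
  have [k _] := key x' y'.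
  have := f_ge0 (normr_ge0 (pp (y' - x'))).
  have := ler_norm (hc (y' - x') - hc w); lra.
set D := `|pp w| in np Dpos key.
have D0 : 0 < D by rewrite lt_def Dpos normr_ge0.
pose a := (f D + hc w) / 2.
have [d' [d0 dD ad]] := leftlsc D0 (a := a) ltac:(rewrite /a; lra).
exists (Num.min (D - d') (a - hc w) / 2).
  by apply: divr_gt0 => //; rewrite lt_min subr_gt0 dD /a; lra.
move=> x' y' hx hy /precE; rewrite -hcB => K.
have m1 : Num.min (D - d') (a - hc w) <= D - d' by rewrite ge_min lexx.
have m2 : Num.min (D - d') (a - hc w) <= a - hc w by rewrite ge_min lexx orbT.
have [k1 k2] := key x' y'.
have := ler_norm (hc (y' - x') - hc w) => k3.
have : f d' <= f `|pp (y' - x')| by apply: mono => //; lra.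
lra.
Qed.

End C3.

End Join.

End Main.

Theorem mainTheorem1 (R : realType) (E : completeNormedModType R)
  (ip : E -> E -> R) (h : E) (f : R -> R) :
  is_inner_product ip ->
  dim_ge E 2 ->
  `|h| = 1 ->
  (forall d, 0 <= d -> 0 <= f d) ->
  (forall d, 0 <= d -> (0 < f d <-> 0 < d)) ->
  (dim_ge E 3 ->
     (cc_sponge (prec_f ip h f) <->
      closed_rel (prec_f ip h f) /\ square_superadditive f)) /\
  (dim_eq E 2 -> closed_rel (prec_f ip h f) ->
     (cc_sponge (prec_f ip h f) <-> superadditive f)).
Proof.
move=> ipP dim2 h1 fge0 fpos.
have [e1 [n1 o1]] := e1_exists ipP h1 dim2.
split.
  move=> dim3; split.
    move=> cc.
    have [u1 [u2 [m1 [m2 [p1 [p2 p12]]]]]] := e12_exists ipP h1 dim3.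
    have S := ssa_of_cc ipP h1 cc m1 p1 m2 p2 p12.
    split => //.
    exact: (closed3 ipP h1 fge0 fpos cc S n1 o1).
  move=> [hcl S].
  apply: (cc_of ipP h1 fge0 fpos hcl (mono_of_SSA fge0 S)).
  exact: (KEY_of_Kgen ipP (Kgen3 ipP fge0 S)).
move=> [d2 nd3] hcl; split.
  move=> cc.
  apply: (sa_of_D_lsc fge0 fpos).
    exact: (D_of_cc ipP h1 cc n1 o1).
  exact: (lsc_of_closed ipP h1 n1 o1 hcl).
move=> S.
apply: (cc_of ipP h1 fge0 fpos hcl (mono_of_SA fge0 S)).
exact: (KEY_of_Kgen ipP (Kgen2 ipP S n1 o1 (collinear ipP h1 nd3 n1 o1))).
Qed.
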